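(* For every integer $n\geq 3$ and every nonzero cardinal number $\beta\leq 2^{\aleph_0}$, there is a partition of $\mathbb{R}^n$ into exactly $\beta$ pairwise disjoint nonempty subsets, each of which is arcwise connected and dense in $\mathbb{R}^n$.
   Context: $\mathbb{R}^n$ carries its usual Euclidean topology. *)

(* Defs.v *)
From Stdlib Require Import Reals Lra.
Open Scope R_scope.

(* Points of R^n: real sequences vanishing from index n on (coordinates 0..n-1). *)
Definition Rn (n : nat) : Type :=
  { x : nat -> R | forall i, (n <= i)%nat -> x i = 0 }.

Fixpoint sqsum (n : nat) (x y : nat -> R) : R :=
  match n with
  | O => 0
  | S k => sqsum k x y + (x k - y k) ^ 2
  end.

Definition dist (n : nat) (x y : Rn n) : R :=
  sqrt (sqsum n (proj1_sig x) (proj1_sig y)).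

Definition continuous_on01 (n : nat) (f : R -> Rn n) : Prop :=
  forall t, 0 <= t <= 1 -> forall eps, eps > 0 ->
    exists delta, delta > 0 /\
      forall s, 0 <= s <= 1 -> Rabs (s - t) < delta -> dist n (f s) (f t) < eps.

Definition arcwise_connected (n : nat) (A : Rn n -> Prop) : Prop :=
  forall a b, A a -> A b -> a <> b ->
    exists f : R -> Rn n,
      continuous_on01 n f /\ f 0 = a /\ f 1 = b /\
      (forall t, 0 <= t <= 1 -> A (f t)) /\
      (forall s t, 0 <= s <= 1 -> 0 <= t <= 1 -> f s = f t -> s = t).

Definition dense (n : nat) (A : Rn n -> Prop) : Prop :=
  forall x eps, eps > 0 -> exists y, A y /\ dist n x y < eps.

(* Main.v *)
Require Import Defs.
From Stdlib Require Import Reals.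
Open Scope R_scope.
From Stdlib Require Import Reals Lra Lia Factorial ZArith Classical ClassicalEpsilon.
Open Scope R_scope.
Lemma Rdiv_le_0_compat : forall x y, 0 <= x -> 0 < y -> 0 <= x / y.
Proof. intros; apply Rle_mult_inv_pos; auto. Qed.

Definition frac (x:R) := x - IZR (up x) + 1.

Lemma frac_char : forall m w, 0 <= w < 1 -> frac (IZR m + w) = w.
Proof.
  intros m w Hw. unfold frac.
  assert (H : (m + 1)%Z = up (IZR m + w)).
  { apply tech_up; rewrite plus_IZR; simpl; lra. }
  rewrite <- H, plus_IZR. simpl. lra.
Qed.

Lemma frac_range : forall x, 0 <= frac x < 1.
Proof. intros x. unfold frac. destruct (archimed x). lra. Qed.

Lemma frac_decomp : forall x, x = IZR (up x - 1) + frac x.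
Proof. intros x. unfold frac. rewrite minus_IZR. simpl. lra. Qed.

Lemma frac_shift : forall x m, frac (x + IZR m) = frac x.
Proof.
  intros x m. rewrite (frac_decomp x) at 1.
  replace (IZR (up x - 1) + frac x + IZR m) with (IZR (up x - 1 + m) + frac x)
    by (rewrite plus_IZR; ring).
  apply frac_char, frac_range.
Qed.

Definition u (x:R) (k:nat) := frac (INR (fact k) * x).

Section Constr.
Variable y : R.
Hypothesis Hy : 1/8 < y < 3/8.

Definition d (k:nat) : Z := (up (INR k * y) - 1)%Z.

Lemma d_spec : forall k, IZR (d k) <= INR k * y < IZR (d k) + 1 /\ 0 <= IZR (d k).
Proof.
  intros k. unfold d. rewrite minus_IZR. simpl.
  destruct (archimed (INR k * y)) as [H1 H2].
  assert (0 <= INR k * y) by (apply Rmult_le_pos; [apply pos_INR|lra]).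
  split; [lra|].
  assert (HZ: (0 < up (INR k * y))%Z) by (apply lt_IZR; simpl; lra).
  assert (HZ2: (1 <= up (INR k * y))%Z) by lia.
  apply IZR_le in HZ2. lra.
Qed.

Fixpoint A (k:nat) : Z := match k with O => 0%Z | S k' => (Z.of_nat (S k') * A k' + d (S k'))%Z end.

Definition Sq (k:nat) := IZR (A k) / INR (fact k).

Lemma fact_pos : forall k, 0 < INR (fact k).
Proof. intros k. apply lt_0_INR. apply lt_O_fact. Qed.

Lemma Sq_step : forall k, Sq (S k) - Sq k = IZR (d (S k)) / INR (fact (S k)).
Proof.
  intros k. unfold Sq.
  assert (EA : A (S k) = (Z.of_nat (S k) * A k + d (S k))%Z) by reflexivity.
  rewrite EA.
  replace (fact (S k)) with (S k * fact k)%nat by reflexivity.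
  rewrite mult_INR, plus_IZR, mult_IZR, <- INR_IZR_INZ.
  assert (H1 := fact_pos k). assert (H2: 0 < INR (S k)) by (apply lt_0_INR; lia).
  field. lra.
Qed.

Definition T (n m : nat) := INR (fact n) * (Sq (n + m) - Sq n).

Lemma T_rec : forall n m, T n (S m) = (IZR (d (S n)) + T (S n) m) / INR (S n).
Proof.
  intros n m. unfold T.
  replace (n + S m)%nat with (S n + m)%nat by lia.
  assert (E := Sq_step n).
  replace (fact (S n)) with (S n * fact n)%nat in * by reflexivity.
  rewrite mult_INR in *.
  assert (H1 := fact_pos n). assert (H2: 0 < INR (S n)) by (apply lt_0_INR; lia).
  replace (Sq (S n + m) - Sq n) with ((Sq (S n + m) - Sq (S n)) + (Sq (S n) - Sq n)) by ring.
  rewrite E. field. lra.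
Qed.

Lemma T_bounds : forall m n, 0 <= T n m <= y + 1 / INR (S n).
Proof.
  induction m as [|m IH]; intros n.
  - unfold T. rewrite Nat.add_0_r. replace (Sq n - Sq n) with 0 by ring.
    assert (0 < INR (S n)) by (apply lt_0_INR; lia).
    assert (0 < 1 / INR (S n)) by (apply Rdiv_lt_0_compat; lra). nra.
  - rewrite T_rec. destruct (IH (S n)) as [H1 H2].
    destruct (d_spec (S n)) as [[D1 D2] D3].
    assert (HN: 1 <= INR (S n)) by (apply (le_INR 1); lia).
    assert (HN2: 2 <= INR (S (S n))) by (apply (le_INR 2); lia).
    assert (1 / INR (S (S n)) <= 1/2).
    { apply Rmult_le_reg_r with (INR (S (S n))); [lra|]. unfold Rdiv. field_simplify; lra. }
    set (N := INR (S n)) in *. set (t := T (S n) m) in *.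
    split.
    + apply Rdiv_le_0_compat; lra.
    + apply Rmult_le_reg_r with N; [lra|].
      replace ((IZR (d (S n)) + t) / N * N) with (IZR (d (S n)) + t) by (field; lra).
      replace ((y + 1 / N) * N) with (N * y + 1) by (field; lra). lra.
Qed.

Lemma T_lower : forall m n, y - 1 / INR (S n) <= T n (S m).
Proof.
  intros m n. rewrite T_rec. destruct (T_bounds m (S n)) as [H1 H2].
  destruct (d_spec (S n)) as [[D1 D2] D3].
  assert (HN: 1 <= INR (S n)) by (apply (le_INR 1); lia).
  set (N := INR (S n)) in *. set (t := T (S n) m) in *.
  apply Rmult_le_reg_r with N; [lra|].
  replace ((IZR (d (S n)) + t) / N * N) with (IZR (d (S n)) + t) by (field; lra).
  replace ((y - 1 / N) * N) with (N * y - 1) by (field; lra). lra.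
Qed.

Lemma Sq_0 : Sq 0 = 0.
Proof. unfold Sq. simpl. lra. Qed.

Lemma Sq_grow : Un_growing Sq.
Proof.
  intros k. assert (E := Sq_step k). destruct (d_spec (S k)) as [_ D].
  assert (0 <= IZR (d (S k)) / INR (fact (S k))) by (apply Rdiv_le_0_compat; [lra| apply fact_pos]).
  lra.
Qed.

Lemma Sq_ub : has_ub Sq.
Proof.
  exists (y + 1). intros r [k ->].
  destruct (T_bounds k 0) as [_ H]. unfold T in H. simpl in H.
  rewrite Sq_0 in H. replace (1 / 1) with 1 in H by field. lra.
Qed.

Lemma exists_s_aux : exists s, Un_cv (u s) y.
Proof.
  destruct (growing_cv Sq Sq_grow Sq_ub) as [s Hs]. exists s.
  assert (Key : forall n, y - 1 / INR (S n) <= INR (fact n) * s - IZR (A n) <= y + 1 / INR (S n)).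
  { intros n. assert (F := fact_pos n).
    assert (HA: IZR (A n) = INR (fact n) * Sq n) by (unfold Sq; field; lra).
    split.
    - apply Rnot_lt_le. intro Hc.
      set (e := (y - 1 / INR (S n)) - (INR (fact n) * s - IZR (A n))).
      assert (He : e / INR (fact n) > 0) by (apply Rdiv_lt_0_compat; unfold e; lra).
      destruct (Hs _ He) as [N HN].
      assert (HH := HN (n + S N)%nat ltac:(lia)). unfold Rdist in HH.
      assert (L := T_lower N n). unfold T in L.
      apply Rabs_def2 in HH. destruct HH as [HH1 HH2].
      assert (INR (fact n) * (Sq (n + S N) - s) < e) .
      { apply Rmult_lt_reg_r with (/ INR (fact n)). apply Rinv_0_lt_compat; lra.
        replace (INR (fact n) * (Sq (n + S N) - s) * / INR (fact n)) with (Sq (n + S N) - s) by (field; lra).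
        unfold Rdiv in HH1. lra. }
      unfold e in *. nra.
    - apply Rnot_lt_le. intro Hc.
      set (e := (INR (fact n) * s - IZR (A n)) - (y + 1 / INR (S n))).
      assert (He : e / INR (fact n) > 0) by (apply Rdiv_lt_0_compat; unfold e; lra).
      destruct (Hs _ He) as [N HN].
      assert (HH := HN (n + N)%nat ltac:(lia)). unfold Rdist in HH.
      destruct (T_bounds N n) as [_ L]. unfold T in L.
      apply Rabs_def2 in HH. destruct HH as [HH1 HH2].
      assert (INR (fact n) * (s - Sq (n + N)) < e) .
      { apply Rmult_lt_reg_r with (/ INR (fact n)). apply Rinv_0_lt_compat; lra.
        replace (INR (fact n) * (s - Sq (n + N)) * / INR (fact n)) with (s - Sq (n + N)) by (field; lra).
        unfold Rdiv in HH2. lra. }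
      unfold e in *. nra. }
  intros eps Heps.
  destruct (archimed (/ eps)) as [Ha _].
  exists (8 + Z.to_nat (up (/ eps)))%nat. intros n Hn.
  assert (HnR : INR (8 + Z.to_nat (up (/ eps))) <= INR n) by (apply le_INR; lia).
  rewrite plus_INR, (INR_IZR_INZ (Z.to_nat _)) in HnR.
  assert (HZ : (0 <= up (/ eps))%Z).
  { apply le_IZR. assert (0 < / eps) by (apply Rinv_0_lt_compat; lra). simpl; lra. }
  rewrite Z2Nat.id in HnR by exact HZ.
  assert (E8: INR 8 = 8) by (simpl; ring). rewrite E8 in HnR.
  assert (Hie: 0 < / eps) by (apply Rinv_0_lt_compat; lra).
  destruct (Key n) as [K1 K2].
  assert (HS: INR (S n) = INR n + 1) by (rewrite S_INR; ring).
  assert (Hinv : 1 / INR (S n) <= 1/9).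
  { rewrite HS. apply Rmult_le_reg_r with (INR n + 1); [lra|].
    replace (1 / (INR n + 1) * (INR n + 1)) with 1 by (field; lra). lra. }
  assert (Hinv2 : 1 / INR (S n) < eps).
  { rewrite HS. apply Rmult_lt_reg_r with (INR n + 1); [lra|].
    replace (1 / (INR n + 1) * (INR n + 1)) with 1 by (field; lra).
    assert (/eps * eps = 1) by (field; lra). nra. }
  unfold u.
  set (w := INR (fact n) * s - IZR (A n)) in *.
  assert (Ew : INR (fact n) * s = IZR (A n) + w) by (unfold w; ring).
  rewrite Ew, frac_char by lra.
  unfold Rdist. apply Rabs_def1; lra.
Qed.
End Constr.

Lemma exists_s : forall y, 1/8 < y < 3/8 -> exists s, Un_cv (u s) y.
Proof. intros y Hy. apply (exists_s_aux y Hy). Qed.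

Lemma fact_div : forall N m, exists c, fact (N + m) = (c * fact N)%nat.
Proof.
  intros N m. induction m as [|m [c Hc]].
  - exists 1%nat. rewrite Nat.add_0_r. lia.
  - exists (S (N + m) * c)%nat. replace (N + S m)%nat with (S (N + m)) by lia.
    simpl fact. rewrite Hc. lia.
Qed.

Lemma shift_cv : forall s y N k, Un_cv (u s) y ->
  Un_cv (u (s + IZR k / INR (fact N))) y.
Proof.
  intros s y N k H eps Heps. destruct (H eps Heps) as [M HM].
  exists (M + N)%nat. intros n Hn.
  destruct (fact_div N (n - N)) as [c Hc].
  replace (N + (n - N))%nat with n in Hc by lia.
  unfold u.
  replace (INR (fact n) * (s + IZR k / INR (fact N))) with (INR (fact n) * s + IZR (k * Z.of_nat c)).
  - rewrite frac_shift. apply HM. lia.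
  - rewrite mult_IZR, <- INR_IZR_INZ, Hc, mult_INR.
    assert (F := fact_pos N). field. lra.
Qed.

Lemma fact_ge : forall N, INR N <= INR (fact N).
Proof.
  intros N. apply le_INR. induction N as [|N IH]; simpl; [lia|].
  assert (1 <= fact N)%nat by (apply lt_O_fact). nia.
Qed.

Lemma dense_label : forall s y, Un_cv (u s) y -> forall v0 delta, delta > 0 ->
  exists a, Rabs (a - v0) < delta /\ Un_cv (u a) y.
Proof.
  intros s y Hs v0 delta Hd.
  destruct (archimed (/ delta)) as [Ha _].
  assert (Hie: 0 < / delta) by (apply Rinv_0_lt_compat; lra).
  set (N := Z.to_nat (up (/ delta))).
  assert (HN : / delta < INR N).
  { unfold N. rewrite INR_IZR_INZ, Z2Nat.id; [lra|]. apply le_IZR. simpl. lra. }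
  assert (HF : / delta < INR (fact N)) by (pose proof (fact_ge N); lra).
  set (F := INR (fact N)) in *.
  assert (HF0 : 0 < F) by lra.
  set (k := (up ((v0 - s) * F) - 1)%Z).
  destruct (archimed ((v0 - s) * F)) as [K1 K2].
  assert (Hk1 : IZR k <= (v0 - s) * F) by (unfold k; rewrite minus_IZR; simpl; lra).
  assert (Hk2 : (v0 - s) * F < IZR k + 1) by (unfold k; rewrite minus_IZR; simpl; lra).
  exists (s + IZR k / F). split.
  - assert (E1 : IZR k / F <= v0 - s).
    { apply Rmult_le_reg_r with F; [lra|]. unfold Rdiv. rewrite Rmult_assoc, Rinv_l; lra. }
    assert (E2 : v0 - s - 1 / F < IZR k / F).
    { apply Rmult_lt_reg_r with F; [lra|]. unfold Rdiv.
      rewrite Rmult_assoc, Rinv_l by lra. field_simplify; lra. }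
    assert (E3 : 1 / F < delta).
    { apply Rmult_lt_reg_r with F; [lra|]. unfold Rdiv. rewrite Rmult_assoc, Rinv_l by lra.
      assert (delta * / delta = 1) by (field; lra). nra. }
    apply Rabs_def1; lra.
  - apply shift_cv; assumption.
Qed.

Definition theta (r : R) := 1/4 + r / (8 * (1 + Rabs r)).

Lemma theta_range : forall r, 1/8 < theta r < 3/8.
Proof.
  intros r. unfold theta. assert (H0 := Rabs_pos r).
  assert (Hq : Rabs (r / (8 * (1 + Rabs r))) < 1/8).
  { unfold Rdiv. rewrite Rabs_mult, Rabs_inv, (Rabs_right (8 * _)) by lra.
    apply Rmult_lt_reg_r with (8 * (1 + Rabs r)); [lra|].
    rewrite Rmult_assoc, Rinv_l by lra. lra. }
  apply Rabs_def2 in Hq. lra.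
Qed.

Lemma theta_inj : forall r r', theta r = theta r' -> r = r'.
Proof.
  intros r r' H. unfold theta in H.
  assert (H1 : r / (8 * (1 + Rabs r)) = r' / (8 * (1 + Rabs r'))) by lra.
  assert (P1 := Rabs_pos r). assert (P2 := Rabs_pos r').
  apply (f_equal (fun z => z * (8 * (1 + Rabs r)) * (8 * (1 + Rabs r')))) in H1.
  replace (r / (8 * (1 + Rabs r)) * (8 * (1 + Rabs r)) * (8 * (1 + Rabs r'))) with (r * (8 * (1 + Rabs r'))) in H1 by (field; lra).
  replace (r' / (8 * (1 + Rabs r')) * (8 * (1 + Rabs r)) * (8 * (1 + Rabs r'))) with (r' * (8 * (1 + Rabs r))) in H1 by (field; lra).
  destruct (Rle_dec 0 r); destruct (Rle_dec 0 r').
  - rewrite (Rabs_right r) in H1 by lra. rewrite (Rabs_right r') in H1 by lra. nra.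
  - rewrite (Rabs_right r) in H1 by lra. rewrite (Rabs_left r') in H1 by lra. nra.
  - rewrite (Rabs_left r) in H1 by lra. rewrite (Rabs_right r') in H1 by lra. nra.
  - rewrite (Rabs_left r) in H1 by lra. rewrite (Rabs_left r') in H1 by lra. nra.
Qed.

Lemma label_exists : forall (I : Type) (i0 : I) (g : I -> R),
  (forall i j, g i = g j -> i = j) ->
  exists h : R -> I, forall i v0 delta, delta > 0 -> exists a, Rabs (a - v0) < delta /\ h a = i.
Proof.
  intros I i0 g Hg.
  assert (Hex : forall a, exists i : I, (exists j, Un_cv (u a) (theta (g j))) -> Un_cv (u a) (theta (g i))).
  { intros a. destruct (classic (exists j, Un_cv (u a) (theta (g j)))) as [[j Hj]|Hn].
    - exists j. intros _. exact Hj.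
    - exists i0. intros Hc. exfalso. apply Hn. exact Hc. }
  exists (fun a => proj1_sig (constructive_indefinite_description _ (Hex a))).
  intros i v0 delta Hd.
  destruct (exists_s (theta (g i)) (theta_range _)) as [s Hs].
  destruct (dense_label s _ Hs v0 delta Hd) as [a [Ha1 Ha2]].
  exists a. split; [exact Ha1|].
  destruct (constructive_indefinite_description _ (Hex a)) as [j Hj]. simpl.
  assert (Hj' := Hj (ex_intro _ i Ha2)).
  apply Hg, theta_inj. exact (UL_sequence _ _ _ Hj' Ha2).
Qed.
From Stdlib Require Import Reals Lra Lia Classical FunctionalExtensionality ProofIrrelevance.

Definition co {n} (v : Rn n) (i : nat) : R := proj1_sig v i.

Lemma Rn_ext {n} (v w : Rn n) : (forall i, co v i = co w i) -> v = w.
Proof.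
  destruct v as [fv pv], w as [fw pw]. unfold co; simpl. intros H.
  assert (fv = fw) by (apply functional_extensionality; exact H). subst.
  f_equal. apply proof_irrelevance.
Qed.

Lemma Rn_neq {n} (v w : Rn n) : v <> w -> exists i, co v i <> co w i.
Proof.
  intros H. apply NNPP. intro Hc. apply H. apply Rn_ext. intros i.
  apply NNPP. intro Hi. apply Hc. exists i. exact Hi.
Qed.

Definition seg {n} (v w : Rn n) (t : R) : Rn n.
Proof.
  refine (exist _ (fun i => co v i + t * (co w i - co v i)) _).
  intros i Hi. unfold co. rewrite (proj2_sig v i Hi), (proj2_sig w i Hi). ring.
Defined.

Lemma co_seg {n} (v w : Rn n) t i : co (seg v w t) i = co v i + t * (co w i - co v i).
Proof. reflexivity. Qed.

Lemma seg0 {n} (v w : Rn n) : seg v w 0 = v.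
Proof. apply Rn_ext. intros i. rewrite co_seg. ring. Qed.
Lemma seg1 {n} (v w : Rn n) : seg v w 1 = w.
Proof. apply Rn_ext. intros i. rewrite co_seg. ring. Qed.

Lemma sqsum_scale : forall k x y x' y' c, (forall i, x i - y i = c * (x' i - y' i)) ->
  sqsum k x y = c^2 * sqsum k x' y'.
Proof.
  induction k as [|k IH]; intros x y x' y' c H; simpl; [ring|].
  rewrite (IH x y x' y' c H), H. ring.
Qed.

Lemma sqsum_nonneg : forall k x y, 0 <= sqsum k x y.
Proof.
  induction k as [|k IH]; intros x y; simpl; [lra|].
  specialize (IH x y). assert (0 <= (x k - y k)^2) by (rewrite <- Rsqr_pow2; apply Rle_0_sqr). lra.
Qed.

Lemma sqrt_lt_eps : forall a eps, 0 <= a -> eps > 0 -> a < eps^2 -> sqrt a < eps.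
Proof.
  intros a eps H0 He H. rewrite <- (sqrt_pow2 eps) by lra. apply sqrt_lt_1_alt. lra.
Qed.

Lemma seg_cont {n} (v w : Rn n) : continuous_on01 n (seg v w).
Proof.
  intros t Ht eps Heps.
  set (Q := sqsum n (co w) (co v)).
  assert (HQ : 0 <= Q) by apply sqsum_nonneg.
  exists (eps / (Q + 1)). split. { apply Rdiv_lt_0_compat; lra. }
  intros s Hs Hst. unfold Defs.dist.
  rewrite (sqsum_scale n _ _ (co w) (co v) (s - t)).
  2:{ intros i. simpl. ring. }
  fold Q. apply sqrt_lt_eps.
  - apply Rmult_le_pos; [apply pow2_ge_0|lra].
  - lra.
  - set (dl := eps / (Q + 1)) in *.
    assert (Hdl : dl * (Q + 1) = eps) by (unfold dl; field; lra).
    assert (Hsq : (s - t)^2 <= dl^2).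
    { rewrite <- (pow2_abs (s - t)). assert (0 <= Rabs (s - t)) by apply Rabs_pos. nra. }
    assert (0 < dl) by (unfold dl; apply Rdiv_lt_0_compat; lra).
    assert ((s - t)^2 * Q <= dl^2 * Q) by (apply Rmult_le_compat_r; lra).
    nra.
Qed.

Lemma seg_inj {n} (v w : Rn n) : v <> w -> forall s t, seg v w s = seg v w t -> s = t.
Proof.
  intros H s t E. destruct (Rn_neq v w H) as [i Hi].
  apply (f_equal (fun p => co p i)) in E. rewrite !co_seg in E.
  assert ((s - t) * (co w i - co v i) = 0) by lra.
  apply Rmult_integral in H0. destruct H0; [lra|]. exfalso; apply Hi; lra.
Qed.

Definition cat {n} (f g : R -> Rn n) (t : R) : Rn n :=
  if Rle_dec t (1/2) then f (2 * t) else g (2 * t - 1).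

Lemma cat0 {n} (f g : R -> Rn n) : cat f g 0 = f 0.
Proof. unfold cat. destruct (Rle_dec 0 (1/2)); [|lra]. f_equal. ring. Qed.
Lemma cat1 {n} (f g : R -> Rn n) : cat f g 1 = g 1.
Proof. unfold cat. destruct (Rle_dec 1 (1/2)); [lra|]. f_equal. ring. Qed.

Lemma cat_in {n} (f g : R -> Rn n) (A : Rn n -> Prop) :
  (forall t, 0 <= t <= 1 -> A (f t)) -> (forall t, 0 <= t <= 1 -> A (g t)) ->
  forall t, 0 <= t <= 1 -> A (cat f g t).
Proof.
  intros Hf Hg t Ht. unfold cat. destruct (Rle_dec t (1/2)); [apply Hf|apply Hg]; lra.
Qed.

Lemma cat_cont {n} (f g : R -> Rn n) : continuous_on01 n f -> continuous_on01 n g ->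
  f 1 = g 0 -> continuous_on01 n (cat f g).
Proof.
  intros Hf Hg E t Ht eps Heps.
  destruct (Rtotal_order t (1/2)) as [Hlt|[Heq|Hgt]].
  - destruct (Hf (2*t) ltac:(lra) eps Heps) as [d [Hd H]].
    exists (Rmin (d/2) (1/2 - t)). split. { apply Rmin_glb_lt; lra. }
    intros s Hs Hst. assert (H1 := Rmin_l (d/2) (1/2 - t)). assert (H2 := Rmin_r (d/2) (1/2 - t)).
    apply Rabs_def2 in Hst. unfold cat.
    destruct (Rle_dec s (1/2)); [|lra]. destruct (Rle_dec t (1/2)); [|lra].
    apply H; [lra|]. apply Rabs_def1; lra.
  - subst t. destruct (Hf 1 ltac:(lra) eps Heps) as [d1 [Hd1 H1]].
    destruct (Hg 0 ltac:(lra) eps Heps) as [d2 [Hd2 H2]].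
    exists (Rmin d1 d2 / 2). split. { apply Rdiv_lt_0_compat; [apply Rmin_glb_lt|]; lra. }
    intros s Hs Hst. assert (Q1 := Rmin_l d1 d2). assert (Q2 := Rmin_r d1 d2).
    apply Rabs_def2 in Hst. unfold cat.
    destruct (Rle_dec (1/2) (1/2)); [|lra].
    replace (2 * (1/2)) with 1 by field.
    destruct (Rle_dec s (1/2)).
    + apply H1; [lra|]. apply Rabs_def1; lra.
    + rewrite E. apply H2; [lra|]. apply Rabs_def1; lra.
  - destruct (Hg (2*t - 1) ltac:(lra) eps Heps) as [d [Hd H]].
    exists (Rmin (d/2) (t - 1/2)). split. { apply Rmin_glb_lt; lra. }
    intros s Hs Hst. assert (H1 := Rmin_l (d/2) (t - 1/2)). assert (H2 := Rmin_r (d/2) (t - 1/2)).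
    apply Rabs_def2 in Hst. unfold cat.
    destruct (Rle_dec s (1/2)); [lra|]. destruct (Rle_dec t (1/2)); [lra|].
    apply H; [lra|]. apply Rabs_def1; lra.
Qed.

Definition lexlt {n} (psi phi : Rn n -> R) (v w : Rn n) :=
  psi v < psi w \/ (psi v = psi w /\ phi v < phi w).

Lemma lexlt_trans {n} psi phi (a b c : Rn n) : lexlt psi phi a b -> lexlt psi phi b c -> lexlt psi phi a c.
Proof. unfold lexlt. lra. Qed.

Definition LexInc {n} (psi phi : Rn n -> R) (f : R -> Rn n) :=
  forall s t, 0 <= s -> s < t -> t <= 1 -> lexlt psi phi (f s) (f t).

Lemma lex_inj {n} psi phi (f : R -> Rn n) : LexInc psi phi f ->
  forall s t, 0 <= s <= 1 -> 0 <= t <= 1 -> f s = f t -> s = t.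
Proof.
  intros H s t Hs Ht E. destruct (Rtotal_order s t) as [h|[h|h]]; auto.
  - specialize (H s t ltac:(lra) h ltac:(lra)). rewrite E in H. unfold lexlt in H; lra.
  - specialize (H t s ltac:(lra) h ltac:(lra)). rewrite E in H. unfold lexlt in H; lra.
Qed.

Lemma lex_cat {n} psi phi (f g : R -> Rn n) : LexInc psi phi f -> LexInc psi phi g -> f 1 = g 0 ->
  LexInc psi phi (cat f g).
Proof.
  intros Hf Hg E s t Hs Hst Ht. unfold cat.
  destruct (Rle_dec s (1/2)); destruct (Rle_dec t (1/2)).
  - apply Hf; lra.
  - destruct (Rle_dec (2 * s) 1) as [_|]; [|lra].
    destruct (Req_dec (2 * s) 1) as [e|e].
    + rewrite e, E. apply Hg; lra.
    + apply lexlt_trans with (f 1). apply Hf; lra. rewrite E. apply Hg; lra.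
  - lra.
  - apply Hg; lra.
Qed.

Definition aff {n} (k : R * R * R) (v : Rn n) : R :=
  fst (fst k) * co v 0 + snd (fst k) * co v 1 + snd k * co v 2.

Lemma aff_seg {n} k (v w : Rn n) t : aff k (seg v w t) = aff k v + t * (aff k w - aff k v).
Proof. unfold aff. rewrite !co_seg. ring. Qed.

Definition pw {n} (kp : R * R * R) (c : R) (k1 k2 : R * R * R) (v : Rn n) : R :=
  if Rle_dec (aff kp v) c then aff k1 v else aff k2 v.

Lemma seg_lex {n} kp c k1 k2 (v w : Rn n) :
  (aff kp v < aff kp w \/ (aff kp v = aff kp w /\
     ((aff kp v <= c /\ aff k1 v < aff k1 w) \/ (aff kp v > c /\ aff k2 v < aff k2 w)))) ->
  LexInc (aff kp) (pw kp c k1 k2) (seg v w).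
Proof.
  intros H s t Hs Hst Ht. unfold lexlt. rewrite !aff_seg.
  destruct H as [H|[H0 H]].
  - left. nra.
  - right. split; [rewrite H0; ring|]. unfold pw. rewrite !aff_seg, H0.
    replace (aff kp w + s * (aff kp w - aff kp w)) with (aff kp w) by ring.
    replace (aff kp w + t * (aff kp w - aff kp w)) with (aff kp w) by ring.
    destruct (Rle_dec (aff kp w) c); nra.
Qed.

Section Geo.
Variable n : nat.
Hypothesis Hn : (3 <= n)%nat.
Variable I : Type.
Variable h : R -> I.
Hypothesis Hd : forall i v0 delta, delta > 0 -> exists a, Rabs (a - v0) < delta /\ h a = i.

Definition Pc (i : I) (v : Rn n) : Prop :=
  (co v 1 = co v 2 /\ h (co v 1) = i) \/ (co v 1 <> co v 2 /\ h (co v 0) = i).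

Definition upd3 (v : Rn n) (a b c : R) : Rn n.
Proof.
  refine (exist _ (fun i => match i with 0 => a | 1 => b | 2 => c | _ => co v i end)%nat _).
  intros i Hi. destruct i as [|[|[|i]]]; try lia. apply (proj2_sig v). exact Hi.
Defined.

Lemma cu0 v a b c : co (upd3 v a b c) 0 = a. Proof. reflexivity. Qed.
Lemma cu1 v a b c : co (upd3 v a b c) 1 = b. Proof. reflexivity. Qed.
Lemma cu2 v a b c : co (upd3 v a b c) 2 = c. Proof. reflexivity. Qed.

Lemma aff_eq k0 k1 k2 (v : Rn n) : aff (k0, k1, k2) v = k0 * co v 0 + k1 * co v 1 + k2 * co v 2.
Proof. reflexivity. Qed.

Lemma seg_in i (v w : Rn n) : Pc i v -> Pc i w ->
  ((co v 1 = co v 2 /\ co w 1 = co w 2 /\ co v 1 = co w 1) \/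
   (co v 0 = co w 0 /\ h (co v 0) = i /\ 0 <= (co v 1 - co v 2) * (co w 1 - co w 2) /\
    ~ (co v 1 = co v 2 /\ co w 1 = co w 2))) ->
  forall t, 0 <= t <= 1 -> Pc i (seg v w t).
Proof.
  intros Pv Pw C t Ht. unfold Pc. rewrite !co_seg.
  destruct C as [[E1 [E2 E3]]|[E0 [Eh [Ep En]]]].
  - left. split; [rewrite <- E1, <- E2; reflexivity|].
    replace (co v 1 + t * (co w 1 - co v 1)) with (co v 1) by (rewrite E3; ring).
    destruct Pv as [[_ H]|[H _]]; [exact H| contradiction].
  - replace (co v 0 + t * (co w 0 - co v 0)) with (co v 0) by (rewrite E0; ring).
    destruct (Req_dec (co v 1 + t * (co w 1 - co v 1)) (co v 2 + t * (co w 2 - co v 2))) as [Q|Q].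
    + left. split; [exact Q|].
      set (a := co v 1 - co v 2) in *. set (b := co w 1 - co w 2) in *.
      assert (Q' : (1 - t) * a + t * b = 0) by (unfold a, b; lra).
      assert (HT : (t = 0 /\ a = 0) \/ (t = 1 /\ b = 0)).
      { destruct (Req_dec a 0) as [Ha|Ha]; destruct (Req_dec b 0) as [Hb|Hb].
        - exfalso. apply En. unfold a, b in *. split; lra.
        - left. split; [|exact Ha]. rewrite Ha in Q'.
          assert (t * b = 0) by lra. apply Rmult_integral in H. destruct H; [lra|contradiction].
        - right. split; [|exact Hb]. rewrite Hb in Q'.
          assert ((1 - t) * a = 0) by lra. apply Rmult_integral in H. destruct H; [lra|contradiction].
        - exfalso. assert (0 < a * b).
          { destruct (Rle_lt_or_eq_dec 0 (a * b) Ep) as [|e]; [assumption|].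
            symmetry in e. apply Rmult_integral in e. destruct e; contradiction. }
          assert (0 <= (1 - t) * (a * a)) by (apply Rmult_le_pos; [lra| apply Rle_0_sqr]).
          assert ((1 - t) * (a * a) + t * (a * b) = 0).
          { replace ((1 - t) * (a * a) + t * (a * b)) with (a * ((1 - t) * a + t * b)) by ring.
            rewrite Q'. ring. }
          destruct (Req_dec t 0); [subst t; nra|].
          assert (0 < t * (a * b)) by (apply Rmult_lt_0_compat; lra). lra. }
      destruct HT as [[Ht0 Ha0]|[Ht1 Hb0]].
      * subst t. replace (co v 1 + 0 * (co w 1 - co v 1)) with (co v 1) by ring.
        destruct Pv as [[_ H]|[H _]]; [exact H|]. exfalso; apply H; unfold a in Ha0; lra.
      * subst t. replace (co v 1 + 1 * (co w 1 - co v 1)) with (co w 1) by ring.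
        destruct Pw as [[_ H]|[H _]]; [exact H|]. exfalso; apply H; unfold b in Hb0; lra.
    + right. split; [exact Q| exact Eh].
Qed.

Definition good (A : Rn n -> Prop) psi phi (a b : Rn n) (f : R -> Rn n) :=
  continuous_on01 n f /\ f 0 = a /\ f 1 = b /\ (forall t, 0 <= t <= 1 -> A (f t)) /\ LexInc psi phi f.

Lemma good_seg A kp c k1 k2 (v w : Rn n) :
  (forall t, 0 <= t <= 1 -> A (seg v w t)) ->
  (aff kp v < aff kp w \/ (aff kp v = aff kp w /\
     ((aff kp v <= c /\ aff k1 v < aff k1 w) \/ (aff kp v > c /\ aff k2 v < aff k2 w)))) ->
  good A (aff kp) (pw kp c k1 k2) v w (seg v w).
Proof.
  intros H1 H2. repeat split.
  - apply seg_cont.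
  - apply seg0.
  - apply seg1.
  - exact H1.
  - apply seg_lex. exact H2.
Qed.

Lemma good_cat A psi phi (a m b : Rn n) f g : good A psi phi a m f -> good A psi phi m b g ->
  good A psi phi a b (cat f g).
Proof.
  intros [F1 [F2 [F3 [F4 F5]]]] [G1 [G2 [G3 [G4 G5]]]].
  assert (E : f 1 = g 0) by congruence.
  repeat split.
  - apply cat_cont; assumption.
  - rewrite cat0; exact F2.
  - rewrite cat1; exact G3.
  - apply cat_in; assumption.
  - apply lex_cat; assumption.
Qed.

Lemma good_arc A psi phi (a b : Rn n) f : good A psi phi a b f ->
  exists f : R -> Rn n,
      continuous_on01 n f /\ f 0 = a /\ f 1 = b /\
      (forall t, 0 <= t <= 1 -> A (f t)) /\
      (forall s t, 0 <= s <= 1 -> 0 <= t <= 1 -> f s = f t -> s = t).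
Proof.
  intros [F1 [F2 [F3 [F4 F5]]]]. exists f. repeat split; try assumption.
  apply (lex_inj psi phi); assumption.
Qed.

Lemma arc_seg A (a b : Rn n) : a <> b -> (forall t, 0 <= t <= 1 -> A (seg a b t)) ->
  exists f : R -> Rn n,
      continuous_on01 n f /\ f 0 = a /\ f 1 = b /\
      (forall t, 0 <= t <= 1 -> A (f t)) /\
      (forall s t, 0 <= s <= 1 -> 0 <= t <= 1 -> f s = f t -> s = t).
Proof.
  intros Hab H. exists (seg a b). repeat split.
  - apply seg_cont.
  - apply seg0.
  - apply seg1.
  - exact H.
  - intros s t _ _. apply seg_inj. exact Hab.
Qed.

Ltac crw := rewrite ?aff_eq, ?cu0, ?cu1, ?cu2.

Lemma arc_conn i : arcwise_connected n (Pc i).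
Proof.
  intros a b Ha Hb Hab.
  assert (Pa := Ha). assert (Pb := Hb).
  destruct Ha as [[Ea Ha]|[Ea Ha]]; destruct Hb as [[Eb Hb]|[Eb Hb]].
  -
    destruct (Req_dec (co a 1) (co b 1)) as [E|E].
    + apply arc_seg; [exact Hab|]. apply seg_in; [auto|auto|]. left; auto.
    + destruct (Hd i (Rmax (co a 0) (co b 0) + 1) (1/2) ltac:(lra)) as [al [Hal Hali]].
      apply Rabs_def2 in Hal.
      assert (M1 := Rmax_l (co a 0) (co b 0)). assert (M2 := Rmax_r (co a 0) (co b 0)).
      set (mu := (co a 1 + co b 1) / 2).
      set (m1 := upd3 a al (co a 1) (co a 1)).
      set (m2 := upd3 a al (mu + 1) (mu - 1)).
      set (m3 := upd3 b al (co b 1) (co b 1)).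
      set (D := co b 1 - co a 1).
      assert (HD : 0 < D * D) by (apply Rsqr_pos_lt; unfold D; lra).
      assert (P1 : Pc i m1) by (left; unfold m1; crw; auto).
      assert (P2 : Pc i m2) by (right; unfold m2; crw; split; [lra|auto]).
      assert (P3 : Pc i m3) by (left; unfold m3; crw; auto).
      set (kp := (0, D, D)). set (c := D * (co a 1 + co b 1)).
      set (k1 := (1, 0, 0)). set (k2 := (-1, 0, 0)).
      eapply (good_arc _ (aff kp) (pw kp c k1 k2)).
      eapply good_cat with m1.
      { apply good_seg.
        - apply seg_in; [auto|auto|]. left. unfold m1; crw. auto.
        - right. unfold kp, k1, m1, c, D; crw. rewrite <- Ea. split; [ring|]. left. unfold D in HD. split; nra. }
      eapply good_cat with m2.
      { apply good_seg.
        - apply seg_in; [auto|auto|]. right. unfold m1, m2; crw. repeat split; auto. nra. intros [_ X]; lra.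
        - left. unfold kp, m1, m2, mu; crw. unfold D in *. nra. }
      eapply good_cat with m3.
      { apply good_seg.
        - apply seg_in; [auto|auto|]. right. unfold m2, m3; crw. repeat split; auto. nra. intros [X _]; lra.
        - left. unfold kp, m2, m3, mu; crw. unfold D in *. nra. }
      { apply good_seg.
        - apply seg_in; [auto|auto|]. left. unfold m3; crw. auto.
        - right. unfold kp, k2, m3, c, D; crw. rewrite <- Eb. split; [ring|]. right. unfold D in HD. split; nra. }
  -
    destruct (Req_dec (co a 0) (co b 0)) as [E|E].
    + apply arc_seg; [exact Hab|]. apply seg_in; [auto|auto|]. right. rewrite E. repeat split; auto.
      rewrite Ea. nra. intros [_ X]; contradiction.
    + set (m := upd3 b (co b 0) (co a 1) (co a 1)).
      assert (P1 : Pc i m) by (left; unfold m; crw; auto).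
      set (D := co b 0 - co a 0).
      assert (HD : 0 < D * D) by (apply Rsqr_pos_lt; unfold D; lra).
      set (kp := (D, 0, 0)). set (c := D * (co a 0 + co b 0) / 2).
      set (k1 := (0, 0, 0)). set (k2 := (0, co b 1 - co b 2, - (co b 1 - co b 2))).
      assert (HE : 0 < (co b 1 - co b 2) * (co b 1 - co b 2)) by (apply Rsqr_pos_lt; lra).
      eapply (good_arc _ (aff kp) (pw kp c k1 k2)).
      eapply good_cat with m.
      { apply good_seg.
        - apply seg_in; [auto|auto|]. left. unfold m; crw. auto.
        - left. unfold kp, m; crw. unfold D in *. nra. }
      { apply good_seg.
        - apply seg_in; [auto|auto|]. right. unfold m; crw. repeat split; auto. nra. intros [_ X]; contradiction.
        - right. unfold kp, k2, m, c; crw. split; [ring|]. right. unfold D in *. split; nra. }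
  -
    destruct (Req_dec (co a 0) (co b 0)) as [E|E].
    + apply arc_seg; [exact Hab|]. apply seg_in; [auto|auto|]. right. repeat split; auto.
      rewrite Eb. nra. intros [X _]; contradiction.
    + set (m := upd3 a (co a 0) (co b 1) (co b 1)).
      assert (P1 : Pc i m) by (left; unfold m; crw; auto).
      set (D := co b 0 - co a 0).
      assert (HD : 0 < D * D) by (apply Rsqr_pos_lt; unfold D; lra).
      set (kp := (D, 0, 0)). set (c := D * (co a 0 + co b 0) / 2).
      set (k1 := (0, - (co a 1 - co a 2), co a 1 - co a 2)). set (k2 := (0, 0, 0)).
      assert (HE : 0 < (co a 1 - co a 2) * (co a 1 - co a 2)) by (apply Rsqr_pos_lt; lra).
      eapply (good_arc _ (aff kp) (pw kp c k1 k2)).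
      eapply good_cat with m.
      { apply good_seg.
        - apply seg_in; [auto|auto|]. right. unfold m; crw. repeat split; auto. nra. intros [X _]; contradiction.
        - right. unfold kp, k1, m, c; crw. split; [ring|]. left. unfold D in *. split; nra. }
      { apply good_seg.
        - apply seg_in; [auto|auto|]. left. unfold m; crw. auto.
        - left. unfold kp, m; crw. unfold D in *. nra. }
  -
    destruct (Req_dec (co a 0) (co b 0)) as [E|E].
    + destruct (Rlt_dec 0 ((co a 1 - co a 2) * (co b 1 - co b 2))) as [Q|Q].
      * apply arc_seg; [exact Hab|]. apply seg_in; [auto|auto|]. right. repeat split; auto. lra.
        intros [X _]; contradiction.
      * set (m := upd3 a (co a 0) (co a 0) (co a 0)).
        assert (P1 : Pc i m) by (left; unfold m; crw; auto).
        set (kp := (0, co b 1 - co b 2, - (co b 1 - co b 2))).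
        assert (HE : 0 < (co b 1 - co b 2) * (co b 1 - co b 2)) by (apply Rsqr_pos_lt; lra).
        assert (HF : (co a 1 - co a 2) * (co b 1 - co b 2) <> 0).
        { intro X. apply Rmult_integral in X. destruct X; [apply Ea|apply Eb]; lra. }
        eapply (good_arc _ (aff kp) (pw kp 0 kp kp)).
        eapply good_cat with m.
        { apply good_seg.
          - apply seg_in; [auto|auto|]. right. unfold m; crw. repeat split; auto. nra. intros [X _]; contradiction.
          - left. unfold kp, m; crw. nra. }
        { apply good_seg.
          - apply seg_in; [auto|auto|]. right. unfold m; crw. repeat split; auto. rewrite E; auto. nra.
            intros [_ X]; contradiction.
          - left. unfold kp, m; crw. nra. }
    + set (m1 := upd3 a (co a 0) (co a 0) (co a 0)).
      set (m2 := upd3 b (co b 0) (co a 0) (co a 0)).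
      assert (P1 : Pc i m1) by (left; unfold m1; crw; auto).
      assert (P2 : Pc i m2) by (left; unfold m2; crw; auto).
      set (D := co b 0 - co a 0).
      assert (HD : 0 < D * D) by (apply Rsqr_pos_lt; unfold D; lra).
      set (kp := (D, 0, 0)). set (c := D * (co a 0 + co b 0) / 2).
      set (k1 := (0, - (co a 1 - co a 2), co a 1 - co a 2)).
      set (k2 := (0, co b 1 - co b 2, - (co b 1 - co b 2))).
      assert (HE : 0 < (co a 1 - co a 2) * (co a 1 - co a 2)) by (apply Rsqr_pos_lt; lra).
      assert (HE2 : 0 < (co b 1 - co b 2) * (co b 1 - co b 2)) by (apply Rsqr_pos_lt; lra).
      eapply (good_arc _ (aff kp) (pw kp c k1 k2)).
      eapply good_cat with m1.
      { apply good_seg.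
        - apply seg_in; [auto|auto|]. right. unfold m1; crw. repeat split; auto. nra. intros [X _]; contradiction.
        - right. unfold kp, k1, m1, c; crw. split; [ring|]. left. unfold D in *. split; nra. }
      eapply good_cat with m2.
      { apply good_seg.
        - apply seg_in; [auto|auto|]. left. unfold m1, m2; crw. auto.
        - left. unfold kp, m1, m2; crw. unfold D in *. nra. }
      { apply good_seg.
        - apply seg_in; [auto|auto|]. right. unfold m2; crw. repeat split; auto. nra. intros [_ X]; contradiction.
        - right. unfold kp, k2, m2, c; crw. split; [ring|]. right. unfold D in *. split; nra. }
Qed.

End Geo.

Lemma sqsum_bound : forall k x y dl, (forall i, Rabs (x i - y i) <= dl) -> sqsum k x y <= INR k * dl ^ 2.
Proof.
  induction k as [|k IH]; intros x y dl H; simpl; [lra|].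
  specialize (IH x y dl H). assert (Hk := H k).
  assert ((x k - y k) ^ 2 <= dl ^ 2).
  { rewrite <- (pow2_abs (x k - y k)). assert (0 <= Rabs (x k - y k)) by apply Rabs_pos. nra. }
  destruct k; simpl in *; lra.
Qed.

Lemma dense_Pc n (Hn : (3 <= n)%nat) I h
  (Hd : forall i v0 delta, delta > 0 -> exists a, Rabs (a - v0) < delta /\ h a = i) :
  forall i : I, dense n (Pc n I h i).
Proof.
  intros i x eps Heps.
  assert (HN := pos_INR n).
  set (dl := eps / (INR n + 1)).
  assert (Hdl : 0 < dl) by (unfold dl; apply Rdiv_lt_0_compat; lra).
  destruct (Hd i (co x 0) dl Hdl) as [al [Hal Hali]].
  set (c2 := if Req_EM_T (co x 2) (co x 1) then co x 2 + dl / 2 else co x 2).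
  exists (upd3 n Hn x al (co x 1) c2). split.
  - right. rewrite cu0, cu1, cu2. split; [|exact Hali].
    unfold c2. destruct (Req_EM_T (co x 2) (co x 1)); lra.
  - unfold Defs.dist. apply sqrt_lt_eps; [apply sqsum_nonneg|lra|].
    apply Rle_lt_trans with (INR n * dl ^ 2).
    + apply sqsum_bound. intros [|[|[|j]]].
      * change (Rabs (co x 0 - al) <= dl). rewrite Rabs_minus_sym. lra.
      * change (Rabs (co x 1 - co x 1) <= dl). rewrite Rminus_diag, Rabs_R0. lra.
      * change (Rabs (co x 2 - c2) <= dl). unfold c2. destruct (Req_EM_T (co x 2) (co x 1)).
        -- replace (co x 2 - (co x 2 + dl / 2)) with (- (dl / 2)) by ring. rewrite Rabs_Ropp, Rabs_right; lra.
        -- rewrite Rminus_diag, Rabs_R0. lra.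
      * change (Rabs (co x (S (S (S j))) - co x (S (S (S j)))) <= dl). rewrite Rminus_diag, Rabs_R0. lra.
    + assert (E : dl * (INR n + 1) = eps) by (unfold dl; field; lra).
      rewrite <- E. simpl. nra.
Qed.

Theorem corollary2 :
  forall (n : nat), (3 <= n)%nat ->
  forall (I : Type), inhabited I ->
  (exists g : I -> R, forall i j, g i = g j -> i = j) ->
  exists P : I -> (Rn n -> Prop),
    (forall i, exists x, P i x) /\
    (forall i j x, i <> j -> P i x -> P j x -> False) /\
    (forall x, exists i, P i x) /\
    (forall i, arcwise_connected n (P i)) /\
    (forall i, dense n (P i)).
Proof.
  intros n Hn I [i0] [g Hg].
  destruct (label_exists I i0 g Hg) as [h Hh].
  exists (Pc n I h). split; [|split; [|split; [|split]]].
  - intros i.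
    set (z := exist (fun x : nat -> R => forall i, (n <= i)%nat -> x i = 0) (fun _ => 0) (fun _ _ => eq_refl) : Rn n).
    destruct (dense_Pc n Hn I h Hh i z 1 ltac:(lra)) as [y [Hy _]]. exists y. exact Hy.
  - intros i j x Hij Hi Hj. apply Hij.
    destruct Hi as [[A1 A2]|[A1 A2]]; destruct Hj as [[B1 B2]|[B1 B2]]; try contradiction; congruence.
  - intros x. destruct (Req_dec (co x 1) (co x 2)) as [E|E].
    + exists (h (co x 1)). left. auto.
    + exists (h (co x 0)). right. auto.
  - intros i. apply arc_conn; assumption.
  - apply dense_Pc; assumption.
Qed.
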